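(* Let $F_{\mathrm{mod}}$ be a toy model H\'enon-like diffeomorphism with $DF_{\mathrm{mod}}(w)=\begin{pmatrix}A_1(w)&\mathbf 0\\ C_1(w)&D_1(w)\end{pmatrix}$ and $DF^N_{\mathrm{mod}}(w)=\begin{pmatrix}A_N(w)&\mathbf 0\\ C_N(w)&D_N(w)\end{pmatrix}$. Suppose $\|D_1\|<m(A_1)$. Then there is $\kappa>0$, independent of $N$, such that $\|C_N A_N^{-1}\|<\kappa$ for all $N\ge1$.
   Context: A toy model H\'enon-like map is $F_{\mathrm{mod}}(x,y,z)=(f(x)-\varepsilon(x,y),\,x,\,\delta(x,y,z))$ on a box $B\subset\mathbb R^3$ ($f$ unimodal, $\varepsilon,\delta$ small analytic). In the block decomposition of $DF_{\mathrm{mod}}$ with respect to $\mathbb R^2\times\mathbb R$, $A_1(w)=DF_{2d}(x,y)$ is the $2\times2$ derivative of $F_{2d}(x,y)=(f(x)-\varepsilon(x,y),x)$, $\mathbf 0$ is the zero column, $C_1(w)=(\partial_x\delta(w)\ \partial_y\delta(w))$ and $D_1(w)=\partial_z\delta(w)$; $A_N,C_N,D_N$ are the corresponding blocks of $DF^N_{\mathrm{mod}}(w)$. For a linear map $L$, $m(L)=\|L^{-1}\|^{-1}$ is the minimum expansion rate; norms and $m(\cdot)$ of these matrix-valued functions are taken as sup (respectively inf) over points of the domain. *)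

(* Defs.v *)
From HB Require Import structures.
From mathcomp Require Import all_boot all_order all_algebra.
From mathcomp Require Import all_classical all_reals all_analysis.
Set Implicit Arguments. Unset Strict Implicit. Unset Printing Implicit Defensive.
Import Order.TTheory GRing.Theory Num.Theory.
Import numFieldNormedType.Exports.
Local Open Scope classical_set_scope.
Local Open Scope ring_scope.

Section ToyDefs.
Variable R : realType.

Definition eucl (n : nat) (v : 'cV[R]_n) : R := Num.sqrt (\sum_i (v i ord0) ^+ 2).

Definition opnorm (m n : nat) (L : 'M[R]_(m, n)) : R :=
  sup [set eucl (L *m v) | v in [set v : 'cV[R]_n | eucl v = 1]].

Definition minexp (n : nat) (L : 'M[R]_n) : R :=
  if L \in unitmx then (opnorm (invmx L))^-1 else 0.

Definition supOn (T : Type) (S : set T) (g : T -> R) : R := sup (g @` S).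
Definition infOn (T : Type) (S : set T) (g : T -> R) : R := inf (g @` S).

Definition cx (w : 'rV[R]_3) : R := w ord0 (inord 0).
Definition cy (w : 'rV[R]_3) : R := w ord0 (inord 1).
Definition cz (w : 'rV[R]_3) : R := w ord0 (inord 2).

Definition toyF (f : R -> R) (eps : R -> R -> R) (delta : R -> R -> R -> R)
  (w : 'rV[R]_3) : 'rV[R]_3 :=
  \row_(i < 3) (if (i : nat) == 0%N then f (cx w) - eps (cx w) (cy w)
                else if (i : nat) == 1%N then cx w
                else delta (cx w) (cy w) (cz w)).

(* Jacobian matrix of G at w: entry (i, j) = d G_i / d w_j, built from the
   (Frechet) differential 'd G w of mathcomp-analysis. *)
Definition jac (G : 'rV[R]_3 -> 'rV[R]_3) (w : 'rV[R]_3) : 'M[R]_3 :=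
  (lin1_mx ('d G w))^T.

Definition blkA (M : 'M[R]_3) : 'M[R]_2 := ulsubmx (M : 'M[R]_(2 + 1, 2 + 1)).
Definition blkB (M : 'M[R]_3) : 'M[R]_(2, 1) := ursubmx (M : 'M[R]_(2 + 1, 2 + 1)).
Definition blkC (M : 'M[R]_3) : 'M[R]_(1, 2) := dlsubmx (M : 'M[R]_(2 + 1, 2 + 1)).
Definition blkD (M : 'M[R]_3) : 'M[R]_1 := drsubmx (M : 'M[R]_(2 + 1, 2 + 1)).

Definition box (a b : 'rV[R]_3) : set 'rV[R]_3 :=
  [set w | forall i : 'I_3, a ord0 i <= w ord0 i <= b ord0 i].

Definition iter_dom (F : 'rV[R]_3 -> 'rV[R]_3) (B : set 'rV[R]_3) (N : nat) :
  set 'rV[R]_3 := [set w | forall k, (k < N)%N -> B (iter k F w)].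

End ToyDefs.

(* Main.v *)
Require Import Defs.
From HB Require Import structures.
From mathcomp Require Import all_boot all_order all_algebra.
From mathcomp Require Import all_classical all_reals all_analysis.
Import Order.TTheory GRing.Theory Num.Theory.
Import numFieldNormedType.Exports.
Local Open Scope classical_set_scope.
Local Open Scope ring_scope.
Set Implicit Arguments. Unset Strict Implicit.

Section Opn.
Variable R : realType.

Lemma eucl_ge0 n (v : 'cV[R]_n) : 0 <= eucl v.
Proof. exact: sqrtr_ge0. Qed.

Lemma eucl1 (v : 'cV[R]_1) : eucl v = `|v 0 0|.
Proof. by rewrite /eucl big_ord1 sqrtr_sqr. Qed.

Lemma sum_sq_ge0 n (v : 'cV[R]_n) : 0 <= \sum_i (v i ord0) ^+ 2.
Proof. by apply: sumr_ge0 => i _; rewrite sqr_ge0. Qed.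

Lemma eucl_coord n (v : 'cV[R]_n) i : `|v i 0| <= eucl v.
Proof.
rewrite /eucl -sqrtr_sqr ler_sqrt ?sum_sq_ge0 //.
rewrite (bigD1 i) //= lerDl; apply: sumr_ge0 => j _; exact: sqr_ge0.
Qed.

Lemma euclZ n k (v : 'cV[R]_n) : eucl (k *: v) = `|k| * eucl v.
Proof.
rewrite /eucl -sqrtr_sqr -sqrtrM ?sqr_ge0 // mulr_sumr; congr Num.sqrt.
by apply: eq_bigr => i _; rewrite mxE exprMn.
Qed.

Lemma eucl_eq0 n (v : 'cV[R]_n) : eucl v = 0 -> v = 0.
Proof.
move=> /eqP; rewrite /eucl sqrtr_eq0 => H.
have H0 : \sum_i (v i ord0) ^+ 2 = 0 by apply/eqP; rewrite eq_le H sum_sq_ge0.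
apply/matrixP => i j; rewrite (ord1 j) mxE.
have := psumr_eq0P (fun i _ => sqr_ge0 (v i ord0)) H0 (i:=i) isT.
by move/eqP; rewrite sqrf_eq0 => /eqP.
Qed.

Definition unitS (m n : nat) (L : 'M[R]_(m, n)) :=
  [set eucl (L *m v) | v in [set v : 'cV[R]_n | eucl v = 1]].

Lemma opn_bound m n (L : 'M[R]_(m, n)) : exists M, forall v : 'cV[R]_n,
  eucl v = 1 -> eucl (L *m v) <= M.
Proof.
exists (Num.sqrt (\sum_i (\sum_j `|L i j|) ^+ 2)) => v v1.
rewrite /eucl ler_sqrt; last by apply: sumr_ge0 => i _; rewrite sqr_ge0.
apply: ler_sum => i _.
rewrite -[X in X <= _]real_normK ?num_real //; apply: lerXn2r;
  rewrite ?nnegrE ?normr_ge0 ?sumr_ge0 //.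
rewrite mxE; apply: (le_trans (ler_norm_sum _ _ _)); apply: ler_sum => j _.
rewrite normrM ler_piMr //; by rewrite -v1 eucl_coord.
Qed.

Lemma unit_ex n : exists v : 'cV[R]_n.+1, eucl v = 1.
Proof.
exists (delta_mx 0 0); rewrite /eucl (bigD1 ord0) //= big1 ?addr0.
  by rewrite mxE eqxx /= expr1n sqrtr1.
by move=> i /negbTE Hi; rewrite mxE Hi /= expr0n.
Qed.

Lemma opn_has_sup m n (L : 'M[R]_(m, n.+1)) : has_sup (unitS L).
Proof.
split; first by have [v Hv] := unit_ex n; exists (eucl (L *m v)); exists v.
have [M HM] := opn_bound L; exists M => _ [v Hv <-]; exact: HM.
Qed.

Lemma opn_ge0 m n (L : 'M[R]_(m, n.+1)) : 0 <= opnorm L.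
Proof.
have [v Hv] := unit_ex n.
apply: (le_trans (eucl_ge0 (L *m v))); apply: sup_upper_bound.
  exact: opn_has_sup.
by exists v.
Qed.

Lemma opn_ub m n (L : 'M[R]_(m, n.+1)) v : eucl (L *m v) <= opnorm L * eucl v.
Proof.
have [/eucl_eq0 ->|nz] := eqVneq (eucl v) 0.
  have e0 : eucl (0 : 'cV[R]_n.+1) = 0.
    by rewrite /eucl big1 ?sqrtr0 // => i _; rewrite mxE expr0n.
  have e0' : eucl (0 : 'cV[R]_m) = 0.
    by rewrite /eucl big1 ?sqrtr0 // => i _; rewrite mxE expr0n.
  by rewrite mulmx0 e0 e0' mulr0.
have gt0 : 0 < eucl v by rewrite lt_def nz eucl_ge0.
have Hu : eucl ((eucl v)^-1 *: v) = 1.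
  by rewrite euclZ ger0_norm ?invr_ge0 ?eucl_ge0 // mulVf.
have := sup_upper_bound (opn_has_sup L) (ex_intro2 _ _ _ Hu erefl).
rewrite -scalemxAr euclZ ger0_norm ?invr_ge0 ?eucl_ge0 //.
by rewrite ler_pdivrMl // mulrC.
Qed.

Lemma opn_le m n (L : 'M[R]_(m, n.+1)) c :
  (forall v, eucl v = 1 -> eucl (L *m v) <= c) -> opnorm L <= c.
Proof.
move=> H; apply: ge_sup; first by have [v Hv] := unit_ex n; exists (eucl (L *m v)); exists v.
by move=> _ [v Hv <-]; exact: H.
Qed.

End Opn.

Section Der1.
Variable R : realType.
Lemma entry_le_norm m n (M : 'M[R]_(m,n)) i j : `|M i j| <= `|M|.
Proof.
rewrite [X in _ <= X]mx_normrE.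
exact: (le_bigmax 0 (fun ij : 'I_m * 'I_n => `|M ij.1 ij.2|) (i, j)).
Qed.
Lemma jac_comp (G H : 'rV[R]_3 -> 'rV[R]_3) w :
  differentiable H w -> differentiable G (H w) ->
  jac (G \o H) w = jac G (H w) *m jac H w.
Proof.
move=> dH dG; rewrite /jac.
have E := diff_comp dH dG.
have E' : forall v, 'd (G \o H) w v = 'd G (H w) ('d H w v).
  move=> v. exact: (congr1 (fun f => f v) E).
have E2 : lin1_mx ('d (G \o H) w) = lin1_mx ('d H w) *m lin1_mx ('d G (H w)).
  apply/matrixP => i j.
  rewrite [LHS]mxE.
  rewrite E'.
  have E3 : forall u, u *m (lin1_mx ('d H w) *m lin1_mx ('d G (H w))) = 'd G (H w) ('d H w u).
    move=> u. rewrite mulmxA. have K1 := mul_rV_lin1 ('d H w) u. rewrite K1. exact: (mul_rV_lin1 ('d G (H w))).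
  have h := congr1 (fun M : 'M[R]_(1,3) => M ord0 j) (E3 (delta_mx ord0 i)).
  rewrite /= -rowE mxE in h.
  exact: (esym h).
rewrite -trmx_mul.
exact: (congr1 trmx E2).
Qed.
End Der1.

Section Der2.
Variable R : realType.
Lemma jac_id0 (G : 'rV[R]_3 -> 'rV[R]_3) w : jac (iter 0 G) w = 1%:M.
Proof.
rewrite /jac. have -> : iter 0 G = id by [].
have -> : lin1_mx ('d id w) = lin1_mx (id : 'rV[R]_3 -> 'rV[R]_3).
  apply/matrixP => i j; rewrite !mxE diff_val mxE /=; by rewrite eq_sym.
apply/matrixP => i j. rewrite !mxE /=; by rewrite eq_sym.
Qed.

Lemma toyF_top (f : R -> R) (eps : R -> R -> R) (delta : R -> R -> R -> R) (u u' : 'rV[R]_3) (k : 'I_3) :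
  cx u = cx u' -> cy u = cy u' -> (k < 2)%N ->
  toyF f eps delta u 0 k = toyF f eps delta u' 0 k.
Proof.
move=> hx hy hk; rewrite !mxE; case: k hk => [[|[|k]]] //= _ _.
by rewrite hx hy.
Qed.

Lemma jacF_ur (f : R -> R) (eps : R -> R -> R) (delta : R -> R -> R -> R) w :
  differentiable (toyF f eps delta) w -> blkB (jac (toyF f eps delta) w) = 0.
Proof.
set F := toyF f eps delta => dF.
apply/matrixP => i j; rewrite !mxE (ord1 j).
set v := delta_mx _ _.
set k := lshift 1 i.
have dE := deriveE v dF.
have hh := congr1 (fun M : 'M[R]_(1,3) => M 0 k) dE.
simpl in hh.
apply: etrans (esym hh) _.
have cv := @diff_derivable _ _ _ F w v dF.
pose g := (fun h : R => h^-1 *: ((F \o shift w) (h *: v) - F w)).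
have cv' : g x @[x --> 0^'] --> 'D_v F w := cv.
set l := 'D_v F w in cv' *.
have key : forall h, g h 0 k = 0.
  move=> h.
  have e1 : cx (h *: v + w) = cx w.
    by rewrite /cx !mxE /= -val_eqE /= inordK //= mulr0 add0r.
  have e2 : cy (h *: v + w) = cy w.
    by rewrite /cy !mxE /= -val_eqE /= inordK //= mulr0 add0r.
  rewrite /g !mxE /= e1 e2 /k.
  by case: i {k hh} => [[|[|m]] hm] //=; rewrite subrr mulr0.
apply/eqP; rewrite -normr_eq0; apply/negPn/negP => nz.
have e0 : 0 < `|l 0 k| by rewrite lt_def nz normr_ge0.
have PF : ProperFilter (dnbhs (0:R)) by exact: _.
have := @cvgr_dist_lt _ _ _ _ PF g l cv' _ e0.
move=> /filter_ex [t /=].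
apply/negP; rewrite -leNgt.
apply: le_trans (entry_le_norm _ 0 k).
clearbody g; by rewrite !mxE key subr0.
Qed.
Lemma blk_mul (P Q : 'M[R]_(2+1)) : blkB P = 0 -> blkB Q = 0 ->
  [/\ blkA (P *m Q) = blkA P *m blkA Q, blkB (P *m Q) = 0 &
      blkC (P *m Q) = blkC P *m blkA Q + blkD P *m blkC Q].
Proof.
rewrite /blkA /blkB /blkC /blkD => hP hQ.
have eP : P = block_mx (ulsubmx P) 0 (dlsubmx P) (drsubmx P) by rewrite -hP submxK.
have eQ : Q = block_mx (ulsubmx Q) 0 (dlsubmx Q) (drsubmx Q) by rewrite -hQ submxK.
rewrite eP eQ mulmx_block !block_mxKul !block_mxKur !block_mxKdl !mul0mx !mulmx0 !addr0 ?add0r.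
by rewrite block_mxKdr; split.
Qed.

Lemma blk1 : blkA (1%:M : 'M[R]_3) = 1%:M /\ blkC (1%:M : 'M[R]_3) = 0.
Proof.
split; apply/matrixP => i j; rewrite !mxE -val_eqE //=.
by rewrite gtn_eqF // (leq_trans (ltn_ord j)).
Qed.

Lemma opn_entry m n (L : 'M[R]_(m, n.+1)) M : (forall i j, `|L i j| <= M) ->
  opnorm L <= Num.sqrt (m%:R * (n.+1%:R * M) ^+ 2).
Proof.
move=> HM; apply: opn_le => v v1.
rewrite /eucl ler_sqrt; last by rewrite mulr_ge0 ?sqr_ge0.
rewrite (_ : m%:R * _ = \sum_(i < m) (n.+1%:R * M) ^+ 2); last first.
  by rewrite sumr_const card_ord mulr_natl.
apply: ler_sum => i _.
have M0 : 0 <= M := le_trans (normr_ge0 _) (HM i 0).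
rewrite -[X in X <= _]real_normK ?num_real //; apply: lerXn2r;
  rewrite ?nnegrE ?normr_ge0 ?mulr_ge0 //.
rewrite mxE; apply: (le_trans (ler_norm_sum _ _ _)).
rewrite (_ : n.+1%:R * M = \sum_(j < n.+1) M); last first.
  by rewrite sumr_const card_ord mulr_natl.
apply: ler_sum => j _.
rewrite normrM -[M]mulr1; apply: ler_pM => //.
by rewrite -v1 eucl_coord.
Qed.

Lemma eucl1D (p q : 'cV[R]_1) : eucl (p + q) <= eucl p + eucl q.
Proof. by rewrite !eucl1 mxE ler_normD. Qed.

Lemma iter_diff (F : 'rV[R]_3 -> 'rV[R]_3) B N w :
  (forall w, B w -> differentiable F w) -> iter_dom F B N w ->
  differentiable (iter N F) w.
Proof.
move=> HF; elim: N => [|N IH] Hd; first exact: ex_diff.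
have -> : iter N.+1 F = F \o iter N F by [].
apply: differentiable_comp; first by apply: IH => k hk; apply: Hd; exact: ltnW.
by apply: HF; apply: Hd.
Qed.

Lemma jac_iterS (F : 'rV[R]_3 -> 'rV[R]_3) B N w :
  (forall w, B w -> differentiable F w) -> iter_dom F B N.+1 w ->
  jac (iter N.+1 F) w = jac F (iter N F w) *m jac (iter N F) w.
Proof.
move=> HF Hd; have -> : iter N.+1 F = F \o iter N F by [].
apply: jac_comp; last by apply: HF; apply: Hd.
by apply: (iter_diff HF) => k hk; apply: Hd; exact: ltnW.
Qed.

End Der2.

Section B3.
Variable R : realType.
Lemma blk_mul3 (P Q : 'M[R]_3) : blkB P = 0 -> blkB Q = 0 ->
  [/\ blkA (P *m Q) = blkA P *m blkA Q, blkB (P *m Q) = 0 &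
      blkC (P *m Q) = blkC P *m blkA Q + blkD P *m blkC Q].
Proof. exact: blk_mul. Qed.
End B3.

Section Step.
Variable R : realType.
Lemma step (J1 J : 'M[R]_3) (c sD iA K : R) :
  blkB J1 = 0 -> blkB J = 0 -> blkA J \in unitmx ->
  opnorm (blkC J *m invmx (blkA J)) <= K ->
  blkA J1 \in unitmx -> opnorm (invmx (blkA J1)) <= iA^-1 ->
  opnorm (blkC J1) <= c -> opnorm (blkD J1) <= sD ->
  0 <= sD -> 0 < iA -> 0 <= K -> c + sD * K = iA * K ->
  [/\ blkB (J1 *m J) = 0, blkA (J1 *m J) \in unitmx &
      opnorm (blkC (J1 *m J) *m invmx (blkA (J1 *m J))) <= K].
Proof.
move=> hB1 hB hU hX uA1 ha hC hD sD0 iA0 K0 cK.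
have [eA eB eC] := blk_mul3 hB1 hB.
rewrite eB eA eC.
move: (blkA J1) (blkC J1) (blkD J1) (blkA J) (blkC J) uA1 ha hC hD hU hX.
move=> A1 C1 D1 A C uA1 ha hC hD hU hX.
have uP : A1 *m A \in unitmx by rewrite unitmx_mul uA1 hU.
split => //.
have eX : (C1 *m A + D1 *m C) *m invmx (A1 *m A) =
          (C1 + D1 *m (C *m invmx A)) *m invmx A1.
  rewrite -[RHS](mulmxK uP); congr (_ *m _).
  rewrite (mulmxA (_ *m invmx A1)) (mulmxKV uA1) mulmxDl -(mulmxA D1) (mulmxKV hU) //.
rewrite eX; apply: opn_le => v v1.
set u := invmx A1 *m v.
have hu : eucl u <= iA^-1.
  by apply: le_trans (opn_ub _ v) _; rewrite v1 mulr1.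
have eu0 : 0 <= eucl u by apply: eucl_ge0.
rewrite -mulmxA mulmxDl -mulmxA; apply: le_trans (eucl1D _ _) _.
have h1 : eucl (C1 *m u) <= c * eucl u.
  by apply: le_trans (opn_ub _ _) _; apply: ler_wpM2r.
have h2 : eucl (D1 *m ((C *m invmx A) *m u)) <= sD * (K * eucl u).
  apply: le_trans (opn_ub _ _) _; apply: ler_pM => //; first exact: opn_ge0.
    exact: eucl_ge0.
  apply: le_trans (opn_ub _ _) _; apply: ler_wpM2r => //.
apply: le_trans (lerD h1 h2) _.
rewrite mulrA -mulrDl cK.
rewrite [X in _ <= X](_ : K = iA * K * iA^-1); last first.
  by rewrite mulrAC divff ?gt_eqF // mul1r.
by apply: ler_wpM2l => //; rewrite mulr_ge0 // ltW.
Qed.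
End Step.

Section Box.
Variable R : realType.
Lemma box_jac_bound (G : 'rV[R]_3 -> 'M[R]_3) (a b : 'rV[R]_3) :
  {within box a b, continuous G} ->
  exists M, forall w, box a b w -> forall i j, `|G w i j| <= M.
Proof.
move=> HG.
have cB : compact (box a b).
  have -> : box a b = [set v | forall i, `[a 0 i, b 0 i]%classic (v 0 i)].
    by apply/seteqP; split => v /= H i; have := H i; rewrite /= in_itv.
  by apply: (@rV_compact R 3 (fun i => `[a 0 i, b 0 i]%classic)) => i; exact: segment_compact.
have := compact_bounded (continuous_compact HG cB).
move=> Hb. move: Hb; rewrite /bounded_near /= => Hb. have [M HM] := filter_ex Hb. exists M => w Bw i j.
apply: le_trans (entry_le_norm _ i j) _; apply: HM; by exists w.
Qed.
End Box.
Unset Implicit Arguments.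
Set Strict Implicit.

Theorem lemma7p2 (R : realType) (f : R -> R) (eps : R -> R -> R)
  (delta : R -> R -> R -> R) (a b : 'rV[R]_3) :
  let F := toyF f eps delta in
  let B := box a b in
  (forall w, B w -> differentiable F w) ->
  {within B, continuous (jac F)} ->
  supOn B (fun w => opnorm (blkD (jac F w))) < infOn B (fun w => minexp (blkA (jac F w))) ->
  exists kappa : R, 0 < kappa /\
    forall N : nat, (1 <= N)%N ->
    forall w, iter_dom F B N w ->
      opnorm (blkC (jac (iter N F) w) *m invmx (blkA (jac (iter N F) w))) < kappa.
Proof.
move=> F B HF HC Hlt.
have [M HM] := box_jac_bound HC.
set c := Num.sqrt (1%:R * (2%:R * M) ^+ 2).
set dB := Num.sqrt (1%:R * (1%:R * M) ^+ 2).
have Cent : forall (P : 'M[R]_3) i j, blkC P i j = P (rshift 2 i) (lshift 1 j).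
  by move=> P i j; rewrite /blkC !mxE.
have Dent : forall (P : 'M[R]_3) i j, blkD P i j = P (rshift 2 i) (rshift 2 j).
  by move=> P i j; rewrite /blkD !mxE.
have hC : forall w, B w -> opnorm (blkC (jac F w)) <= c.
  by move=> w Bw; apply: opn_entry => i j; rewrite Cent; apply: HM.
have hD : forall w, B w -> opnorm (blkD (jac F w)) <= dB.
  by move=> w Bw; apply: opn_entry => i j; rewrite Dent; apply: HM.
set sD := supOn B _ in Hlt.
set iA := infOn B _ in Hlt.
have supD_ub : forall w, B w -> opnorm (blkD (jac F w)) <= sD.
  move=> w Bw; apply: sup_upper_bound; last by exists w.
  split; first by exists (opnorm (blkD (jac F w))); exists w.
  by exists dB => _ [u Bu <-]; exact: hD.
have minexp_ge0 : forall n (L : 'M[R]_n.+1), 0 <= minexp L.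
  by move=> n L; rewrite /minexp; case: ifP => _ //; rewrite invr_ge0 opn_ge0.
have infA_lb : forall w, B w -> iA <= minexp (blkA (jac F w)).
  move=> w Bw; apply: ge_inf; last by exists w.
  by exists 0 => _ [u Bu <-]; exact: minexp_ge0.
have gap : 0 < iA - sD by rewrite subr_gt0.
set K := c / (iA - sD).
have K0 : 0 <= K by rewrite divr_ge0 ?sqrtr_ge0 ?ltW.
have cK' : K * (iA - sD) = c by rewrite /K divfK // gt_eqF.
have cK : c + sD * K = iA * K.
  by rewrite -cK' mulrBr [sD * K]mulrC subrK mulrC.
have inv : forall N w, iter_dom F B N w ->
  [/\ blkB (jac (iter N F) w) = 0, blkA (jac (iter N F) w) \in unitmx &
      opnorm (blkC (jac (iter N F) w) *m invmx (blkA (jac (iter N F) w))) <= K].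
  elim => [|N IH] w Hd.
    rewrite jac_id0; have [eA eC] := blk1 R; rewrite eA eC mul0mx.
    split.
    - apply/matrixP => i j; rewrite !mxE -val_eqE /=; rewrite ltn_eqF //; exact: (leq_trans (ltn_ord i) (leq_addr _ _)).
    - exact: unitmx1.
    - apply: opn_le => v _; rewrite mul0mx eucl1 mxE normr0 //.
  have HdN : iter_dom F B N w by move=> k hk; apply: Hd; exact: ltnW.
  have Bw' : B (iter N F w) by apply: Hd.
  have [hB hU hX] := IH w HdN.
  rewrite (jac_iterS HF Hd).
  have hB1 : blkB (jac F (iter N F w)) = 0 by apply: jacF_ur; apply: HF.
  have D0 := opn_ge0 (blkD (jac F (iter N F w))).
  have sD0 : 0 <= sD := le_trans D0 (supD_ub _ Bw').
  have iA0 : 0 < iA := le_lt_trans sD0 Hlt.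
  have mA1 := infA_lb _ Bw'.
  have uA1 : blkA (jac F (iter N F w)) \in unitmx.
    move: mA1; rewrite /minexp; case: ifP => // _ h.
    by move: (lt_le_trans iA0 h); rewrite ltxx.
  have ha : opnorm (invmx (blkA (jac F (iter N F w)))) <= iA^-1.
    move: mA1; rewrite /minexp; case: ifP => [_ h|]; last first.
      by move/negbT/negP => nU; exfalso; exact: nU uA1.
    have ap : 0 < (opnorm (invmx (blkA (jac F (iter N F w)))))^-1.
      exact: lt_le_trans h.
    rewrite invr_gt0 in ap.
    by rewrite -[X in X <= _]invrK lef_pV2 ?posrE ?invr_gt0.
  exact: (step hB1 hB hU hX uA1 ha (hC _ Bw') (supD_ub _ Bw') sD0 iA0 K0 cK).
exists (K + 1); split; first by rewrite (le_lt_trans K0) // ltrDl ltr01.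
move=> N _ w Hd; have [_ _ h] := inv N w Hd.
by rewrite (le_lt_trans h) // ltrDl ltr01.
Qed.
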